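(* Let $s\in S$. The composition of the inclusion $\mathrm{Der}^S_s\overline A_{H,S}\hookrightarrow\mathrm{Der}^{SS}\overline A_{H,S}$ with the projection $\mathrm{Der}^{SS}\overline A_{H,S}\to\mathrm{ODer}^{SS}\overline A_{H,S}$ is surjective, and its kernel is spanned by the inner derivations $[X_s^n,\,\cdot\,]$, $n\ge0$.
   Context: Let $H$ be a finite-dimensional symplectic $\mathbb Q$-vector space with symplectic basis $\{p_i,q_i\}$ and $S$ a non-empty finite set. $A_{H,S}$ is the free associative algebra on $H\oplus\mathbb Q[S]$ (generators $p_i,q_i$, and $X_t$ for $t\in S$), and $\overline A_{H,S}$ is its quotient by the two-sided ideal generated by $\sum_i[p_i,q_i]+\sum_{t\in S}X_t$ (so $\overline A_{H,S}$ is free on $p_i,q_i$, $X_t$, $t\neq s$). A derivation $\mathcal D$ of $\overline A_{H,S}$ is semi-special if for every $t\in S$ there is $B_t\in\overline A_{H,S}$ with $\mathcal D(X_t)=[B_t,X_t]$; they form a Lie algebra $\mathrm{Der}^{SS}\overline A_{H,S}$ containing all inner derivations $[B,\cdot\,]$. $\mathrm{ODer}^{SS}\overline A_{H,S}$ is the quotient of $\mathrm{Der}^{SS}\overline A_{H,S}$ by the inner derivations. $\mathrm{Der}^S_s\overline A_{H,S}\subset\mathrm{Der}^{SS}\overline A_{H,S}$ is the Lie subalgebra of semi-special derivations killing $X_s$. *)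

(* Defs.v *)
From HB Require Import structures.
From mathcomp Require Import all_boot all_order all_algebra.
Set Implicit Arguments. Unset Strict Implicit. Unset Printing Implicit Defensive.
Import Order.TTheory GRing.Theory Num.Theory.
Local Open Scope ring_scope.

Definition alg_hom (B C : algType rat) (f : B -> C) : Prop :=
  linear f /\ monoid_morphism f.

Definition rel_holds (g : nat) (S : finType) (C : algType rat)
  (p q : 'I_g -> C) (X : S -> C) : Prop :=
  \sum_(i < g) (p i * q i - q i * p i) + \sum_(t : S) X t = 0.

(* (B, p, q, X) is the quotient of the free associative (unital) Q-algebra
   on p_i, q_i (i < g) and X_t (t in S) by the two-sided ideal generated by
   sum_i [p_i,q_i] + sum_t X_t, characterized by its universal property. *)
Definition is_Abar (g : nat) (S : finType) (B : algType rat)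
  (p q : 'I_g -> B) (X : S -> B) : Prop :=
  rel_holds p q X /\
  forall (C : algType rat) (p' q' : 'I_g -> C) (X' : S -> C),
    rel_holds p' q' X' ->
    (exists f : B -> C, alg_hom f /\ (forall i, f (p i) = p' i) /\
        (forall i, f (q i) = q' i) /\ (forall t, f (X t) = X' t)) /\
    (forall f1 f2 : B -> C, alg_hom f1 -> alg_hom f2 ->
        (forall i, f1 (p i) = f2 (p i)) -> (forall i, f1 (q i) = f2 (q i)) ->
        (forall t, f1 (X t) = f2 (X t)) -> forall x, f1 x = f2 x).

Definition is_der (B : algType rat) (D : B -> B) : Prop :=
  linear D /\ forall x y, D (x * y) = D x * y + x * D y.

Definition semi_special (S : finType) (B : algType rat) (X : S -> B)
  (D : B -> B) : Prop :=
  is_der D /\ forall t, exists b, D (X t) = b * X t - X t * b.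

Definition inner_der (B : algType rat) (D : B -> B) : Prop :=
  exists b, forall x, D x = b * x - x * b.

Definition der_S_s (S : finType) (B : algType rat) (X : S -> B) (s : S)
  (D : B -> B) : Prop :=
  semi_special X D /\ D (X s) = 0.

(* Main.v *)
Require Import Defs.
From HB Require Import structures.
From mathcomp Require Import all_boot all_order all_algebra.
From Stdlib Require Import Lia.
Set Implicit Arguments. Unset Strict Implicit. Unset Printing Implicit Defensive.

Ltac slia :=
  repeat match goal with
  | H : is_true (leq _ _) |- _ => move/leP: H => H
  | H : is_true (@eq_op _ _ _) |- _ => move/eqP: H => H
  end;
  (match goal with
  | |- is_true (leq _ _) => apply/leP
  | |- is_true (@eq_op _ _ _) => apply/eqP
  | _ => idtac end);
  unfold addn, muln, subn, addn_rec, muln_rec, subn_rec in *; lia.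

From Stdlib Require Import ClassicalEpsilon.
Import GRing.Theory.
Section Words.
Variables (g : nat) (S : finType).
Definition Let := ('I_g + 'I_g + S)%type.
Definition num (x : Let) : nat :=
  match x with
  | inl (inl i) => (2 * i).+1
  | inl (inr i) => 2 * i
  | inr t => 2 * g + enum_rank t
  end.
Definition mm := 2 * g + #|S|.
Definition bs := mm.+1.
Definition code (w : seq Let) : nat := foldr (fun x c => c * bs + (num x).+1) 0 w.

Lemma num_lt x : num x < mm.
Proof.
rewrite /mm; case: x => [[i|i]|t] /=.
- have := ltn_ord i; move=> h; slia.
- have := ltn_ord i; move=> h; slia.
- by rewrite ltn_add2l ltn_ord.
Qed.

Lemma num_ltS x : (num x).+1 < bs.
Proof. by rewrite /bs ltnS num_lt. Qed.

Lemma bs_gt0 : 0 < bs. Proof. by []. Qed.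

Lemma num_inj : injective num.
Proof.
case=> [[i|i]|t] [[j|j]|u] /= h.
- by congr (inl (inl _)); apply: val_inj => /=; slia.
- exfalso; slia.
- exfalso; have := ltn_ord i; move=> hi; slia.
- exfalso; slia.
- by congr (inl (inr _)); apply: val_inj => /=; slia.
- exfalso; have := ltn_ord i; move=> hi; slia.
- exfalso; have := ltn_ord j; move=> hi; slia.
- exfalso; have := ltn_ord j; move=> hi; slia.
- by congr inr; apply: enum_rank_inj; apply: val_inj; apply/eqP; rewrite -(eqn_add2l (2 * g)) h.
Qed.

Lemma code_cons x w : code (x :: w) = code w * bs + (num x).+1.
Proof. by []. Qed.

Lemma code_cat u z : code (u ++ z) = code z * bs ^ size u + code u.
Proof.
elim: u => [|x u IH] /=; first by rewrite expn0 muln1 addn0.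
by rewrite IH mulnDl -mulnA -expnSr addnA.
Qed.

Lemma code_lt w : code w < bs ^ size w.
Proof.
elim: w => [|x w IH] //=.
rewrite expnSr; apply: (@leq_trans ((code w).+1 * bs)).
  by rewrite mulSn addnC ltn_add2r num_ltS.
by rewrite leq_mul2r IH orbT.
Qed.

Lemma code_ge x w : bs ^ size w <= code (x :: w).
Proof.
elim: w x => [|y w IH] x /=; first by rewrite expn0.
apply: (leq_trans _ (leq_addr _ _)); rewrite expnSr leq_mul2r.
by rewrite (IH y) orbT.
Qed.

Lemma code_size u v : code u <= code v -> size u <= size v.
Proof.
move=> h; rewrite leqNgt; apply/negP => hlt.
case: u hlt h => [|x u] //= hlt h.
have h1 := code_lt v; have h2 := code_ge x u.
have h3 : bs ^ size v <= bs ^ size u by rewrite leq_pexp2l.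
move: h; rewrite -code_cons leqNgt => /negP; apply.
exact: (leq_trans h1 (leq_trans h3 h2)).
Qed.

Lemma code_inj : injective code.
Proof.
elim=> [|x u IH] [|y v] //=.
- by move=> h; move: (num_ltS y) => _; rewrite addnS in h.
- by rewrite addnS.
move=> h.
have hm := congr1 (modn^~ bs) h; rewrite /= !modnMDl !modn_small ?num_ltS // in hm.
have hd := congr1 (divn^~ bs) h; rewrite /= !divnMDl // !divn_small ?num_ltS // !addn0 in hd.
by case: hm => /num_inj ->; rewrite (IH _ hd).
Qed.

Lemma code_mono u1 u2 v1 v2 : code u1 <= code v1 -> code u2 <= code v2 ->
  code (u1 ++ u2) <= code (v1 ++ v2).
Proof.
move=> h1 h2; rewrite !code_cat; apply: leq_add => //.
apply: leq_mul => //; rewrite leq_pexp2l //; exact: code_size.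
Qed.

Lemma code_mono_eq u1 u2 v1 v2 : code u1 <= code v1 -> code u2 <= code v2 ->
  code (u1 ++ u2) = code (v1 ++ v2) -> u1 = v1 /\ u2 = v2.
Proof.
move=> h1 h2; rewrite !code_cat => e.
have hs := code_size h1.
have hp : bs ^ size u1 <= bs ^ size v1 by rewrite leq_pexp2l.
have hm : code u2 * bs ^ size u1 <= code v2 * bs ^ size v1 by apply: leq_mul.
have e1 : code u1 = code v1.
  apply/eqP; rewrite eqn_leq h1 /=; rewrite leqNgt; apply/negP => hlt.
  have : code u2 * bs ^ size u1 + code u1 < code v2 * bs ^ size v1 + code v1.
    by rewrite -addnS; exact: leq_add hm hlt.
  by rewrite e ltnn.
have e1' := code_inj e1; subst v1; split => //.
apply: code_inj; move: e => /eqP; rewrite eqn_add2r eqn_pmul2r ?expn_gt0 ?bs_gt0 //.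
by move/eqP.
Qed.

End Words.
Local Open Scope ring_scope.
Lemma sum_delta (N c : nat) (F : nat -> rat) :
  \sum_(j < N) F j * ((j : nat) == c)%:R = (c < N)%:R * F c.
Proof.
elim: N => [|N IH]; first by rewrite big_ord0 ltn0 mul0r.
rewrite big_ord_recr /= IH.
case: (eqVneq N c) => [->|ne].
  by rewrite ltnn ltnSn mul0r add0r mulr1 mul1r.
have -> : (c < N.+1)%N = (c < N)%N by rewrite ltnS leq_eqVlt (eq_sym c) (negPf ne).
by rewrite mulr0 addr0.
Qed.
Section AlgHom.
Variables (A C : algType rat) (f : A -> C) (hf : alg_hom f).
Lemma ahD x y : f (x + y) = f x + f y.
Proof. by have := (hf.1 1 x y); rewrite !scale1r. Qed.
Lemma ah0 : f 0 = 0.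
Proof. by apply/eqP; rewrite -(addrI (f 0) (_ : f 0 + f 0 = f 0 + 0)) // addr0 -ahD addr0. Qed.
Lemma ahZ a x : f (a *: x) = a *: f x.
Proof. by have := (hf.1 a x 0); rewrite !addr0 ah0 addr0. Qed.
Lemma ahN x : f (- x) = - f x.
Proof. by rewrite -scaleN1r ahZ scaleN1r. Qed.
Lemma ahB x y : f (x - y) = f x - f y.
Proof. by rewrite ahD ahN. Qed.
Lemma ahM x y : f (x * y) = f x * f y.
Proof. exact: hf.2.2. Qed.
Lemma ah1 : f 1 = 1.
Proof. exact: hf.2.1. Qed.
Lemma ahX x n : f (x ^+ n) = f x ^+ n.
Proof. elim: n => [|n IH]; first by rewrite !expr0 ah1. by rewrite !exprS ahM IH. Qed.
Lemma ah_sum (I : Type) (r : seq I) (P : pred I) (F : I -> A) :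
  f (\sum_(i <- r | P i) F i) = \sum_(i <- r | P i) f (F i).
Proof. exact: (big_morph f ahD ah0). Qed.
End AlgHom.

Lemma alg_hom_comp (A B C : algType rat) (f : A -> B) (h : B -> C) :
  alg_hom f -> alg_hom h -> alg_hom (h \o f).
Proof.
move=> hf hh; split; first by move=> a x y /=; rewrite hf.1 hh.1.
by split; [rewrite /= ah1 // ah1 | move=> x y /=; rewrite !ahM].
Qed.

Lemma alg_hom_id (A : algType rat) : alg_hom (@id A).
Proof. by split. Qed.

Section Span.
Variables (B : algType rat) (P : pred B) (Pc : GRing.subsemialg_closed P).
HB.instance Definition _ := GRing.isSubalgClosed.Build rat B P Pc.
Definition SubT : Type := {x : B | P x}.
HB.instance Definition _ := [isSub of SubT for (@sval B P)].
HB.instance Definition _ := [Choice of SubT by <:].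
HB.instance Definition _ := [SubChoice_isSubAlgebra of SubT by <:].
Lemma val_alg : alg_hom (fun x : SubT => val x).
Proof. split. move=> a x y /=. by []. split => //. Qed.

Lemma abar_ind (g : nat) (S : finType) (p q : 'I_g -> B) (X : S -> B)
  (HB : is_Abar p q X) :
  (forall i, P (p i)) -> (forall i, P (q i)) -> (forall t, P (X t)) -> forall x, P x.
Proof.
move=> Pp Pq PX x.
pose p' i : SubT := Sub (p i) (Pp i).
pose q' i : SubT := Sub (q i) (Pq i).
pose X' t : SubT := Sub (X t) (PX t).
have rel' : rel_holds p' q' X'.
  have hv := val_alg.
  apply: val_inj; rewrite (ahD hv) !(ah_sum hv) (ah0 hv).
  by apply: etrans HB.1; congr (_ + _).
have [[f [hf [fp [fq fX]]]] _] := HB.2 SubT p' q' X' rel'.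
have hv := val_alg.
have := (HB.2 B p q X HB.1).2 (fun x => val (f x)) id (alg_hom_comp hf hv) (@alg_hom_id B).
move=> /(_ _ _ _ x) <- //.
- exact: valP.
- by move=> i; rewrite fp.
- by move=> i; rewrite fq.
- by move=> t; rewrite fX.
Qed.
End Span.

Definition pb (Q : Prop) : bool := if excluded_middle_informative Q then true else false.
Lemma pbP (Q : Prop) : pb Q <-> Q.
Proof. by rewrite /pb; case: excluded_middle_informative. Qed.

Section Model.
Variables (g : nat) (S : finType) (B : algType rat) (p q : 'I_g -> B) (X : S -> B).
Hypothesis HB : is_Abar p q X.
Variable sp : S.

Local Notation Let := (Let g S).
Local Notation code := (@code g S).
Local Notation num := (@num g S).
Local Notation bs := (@bs g S).

Definition ltx (x : Let) : B :=
  match x with inl (inl i) => p i | inl (inr i) => q i | inr t => X t end.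
Definition mw (w : seq Let) : B := foldr (fun x acc => ltx x * acc) 1 w.
Definition valid (x : Let) : bool := x != inr sp.

Lemma mw_cat u v : mw (u ++ v) = mw u * mw v.
Proof. by elim: u => [|x u IH] /=; rewrite ?mul1r // IH mulrA. Qed.

Definition Lm (n k : nat) : 'M[rat]_n.+1 :=
  \matrix_(i, j) (((i : nat) == (j : nat) * bs + k.+1)%N)%:R.
Definition PP n (i : 'I_g) := Lm n (num (inl (inl i))).
Definition QQ n (i : 'I_g) := Lm n (num (inl (inr i))).
Definition XX n (t : S) : 'M[rat]_n.+1 :=
  if t == sp then - (\sum_(i < g) (PP n i * QQ n i - QQ n i * PP n i)
                    + \sum_(t' | t' != sp) Lm n (num (inr t')))
  else Lm n (num (inr t)).

Lemma relM n : rel_holds (PP n) (QQ n) (XX n).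
Proof.
rewrite /rel_holds (bigD1 sp) //= {1}/XX eqxx.
rewrite (eq_bigr (fun t => Lm n (num (inr t)))); last by move=> t /negPf h; rewrite /XX h.
by rewrite opprD addrNK addrN.
Qed.

Lemma psi_ex n : { f : B -> 'M[rat]_n.+1 | alg_hom f /\ (forall i, f (p i) = PP n i) /\
   (forall i, f (q i) = QQ n i) /\ (forall t, f (X t) = XX n t) }.
Proof.
apply: constructive_indefinite_description.
exact: ((HB.2 _ _ _ _ (relM n)).1).
Qed.

Definition psi n := sval (psi_ex n).
Lemma psi_alg n : alg_hom (psi n). Proof. exact: (svalP (psi_ex n)).1. Qed.

Lemma psi_lt n x : valid x -> psi n (ltx x) = Lm n (num x).
Proof.
have [_ [hp [hq hX]]] := svalP (psi_ex n).
case: x => [[i|i]|t] /= v; rewrite /psi ?hp ?hq ?hX //.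
rewrite /XX; case: eqP v => [->|] //; by rewrite /valid eqxx.
Qed.
Lemma dummy : True. by [].
Qed.

Lemma psi_mw n w : all valid w -> forall i, psi n (mw w) i ord0 = ((i : nat) == code w)%:R.
Proof.
elim: w => [|x w IH] /=.
  move=> _ i; rewrite (ah1 (psi_alg n)) !mxE. by [].
case/andP => vx vw i.
rewrite (ahM (psi_alg n)) psi_lt // -mulmxE mxE.
rewrite (eq_bigr (fun j : 'I_n.+1 => ((fun j : nat => (((i : nat) == j * bs + (num x).+1)%N)%:R) j)
   * ((j : nat) == code w)%:R)); last by move=> j _; rewrite !mxE IH.
apply: (etrans (sum_delta n.+1 (code w) (fun j : nat => (((i : nat) == j * bs + (num x).+1)%N)%:R))).
case: ltnP => h; first by rewrite mul1r.
rewrite mul0r; suff -> : ((i:nat) == code w * bs + (num x).+1)%N = false by [].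
apply/negP => /eqP e.
have := ltn_ord i; rewrite e ltnNge => /negP; apply.
apply: (leq_trans h); apply: (leq_trans _ (leq_addr _ _)).
by rewrite leq_pmulr.
Qed.

Definition coef (b : B) (u : seq Let) : rat := psi (code u) b (inord (code u)) ord0.

Lemma coef_mw w u : all valid w -> coef (mw w) u = (u == w)%:R.
Proof.
move=> vw; rewrite /coef psi_mw // inordK //.
by case: (eqVneq u w) => [->|ne]; rewrite ?eqxx // ; case: eqP => // /code_inj e; rewrite e eqxx in ne.
Qed.

Lemma coefD b c u : coef (b + c) u = coef b u + coef c u.
Proof. by rewrite /coef (ahD (psi_alg _)) mxE. Qed.
Lemma coefZ a b u : coef (a *: b) u = a * coef b u.
Proof. by rewrite /coef (ahZ (psi_alg _)) mxE. Qed.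
Lemma coef0 u : coef 0 u = 0.
Proof. by rewrite /coef (ah0 (psi_alg _)) mxE. Qed.
Lemma coefN b u : coef (- b) u = - coef b u.
Proof. by rewrite -scaleN1r coefZ mulN1r. Qed.
Lemma coefB b c u : coef (b - c) u = coef b u - coef c u.
Proof. by rewrite coefD coefN. Qed.
Lemma coef_sum (I : Type) (r : seq I) (P : pred I) (F : I -> B) u :
  coef (\sum_(i <- r | P i) F i) u = \sum_(i <- r | P i) coef (F i) u.
Proof. exact: (big_morph (coef^~ u) (fun b c => coefD b c u) (coef0 u)). Qed.


Definition ev (r : seq (rat * seq Let)) : B := \sum_(e <- r) e.1 *: mw e.2.
Definition validr (r : seq (rat * seq Let)) := all (fun e => all valid e.2) r.
Definition spanned (b : B) := exists r, validr r /\ b = ev r.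

Lemma spanned0 : spanned 0.
Proof. by exists [::]; rewrite /ev big_nil. Qed.
Lemma spanned1 : spanned 1.
Proof. by exists [:: (1, [::])]; rewrite /ev big_seq1 /= scale1r. Qed.
Lemma spannedD b c : spanned b -> spanned c -> spanned (b + c).
Proof.
move=> [r1 [v1 ->]] [r2 [v2 ->]]; exists (r1 ++ r2); split; first by rewrite /validr all_cat; apply/andP.
by rewrite /ev big_cat.
Qed.
Lemma spannedZ a b : spanned b -> spanned (a *: b).
Proof.
move=> [r [v ->]]; exists [seq (a * e.1, e.2) | e <- r]; split.
  by rewrite /validr all_map; apply: sub_all v => e.
by rewrite /ev big_map scaler_sumr; apply: eq_bigr => e _ /=; rewrite scalerA.
Qed.
Lemma spannedM b c : spanned b -> spanned c -> spanned (b * c).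
Proof.
move=> [r1 [v1 ->]] [r2 [v2 ->]].
exists [seq (e1.1 * e2.1, e1.2 ++ e2.2) | e1 <- r1, e2 <- r2]; split.
  apply/allP => e /allpairsP [[e1 e2] [h1 h2 ->]] /=.
  by rewrite all_cat (allP v1 _ h1) (allP v2 _ h2).
rewrite /ev big_allpairs_dep mulr_suml; apply: eq_bigr => e1 _.
rewrite mulr_sumr; apply: eq_bigr => e2 _ /=.
by rewrite mw_cat -scalerAl -scalerAr scalerA.
Qed.
Lemma spanned_mw w : all valid w -> spanned (mw w).
Proof. by move=> v; exists [:: (1, w)]; rewrite /validr /= v /ev big_seq1 scale1r. Qed.

Lemma spanned_all b : spanned b.
Proof.
have Pc : GRing.subsemialg_closed (fun b => pb (spanned b)).
  split.
  - by apply/pbP; exact: spanned1.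
  - split; first by apply/pbP; exact: spanned0.
    by move=> x y /pbP hx /pbP hy; apply/pbP; exact: spannedD.
  - by move=> a x /pbP hx; apply/pbP; exact: spannedZ.
  - by move=> x y /pbP hx /pbP hy; apply/pbP; exact: spannedM.
have gen x : valid x -> spanned (ltx x).
  by move=> v; have := spanned_mw (w := [:: x]); rewrite /= mulr1 v; apply.
have hp i : spanned (p i) by exact: (gen (inl (inl i))).
have hq i : spanned (q i) by exact: (gen (inl (inr i))).
have hX t : spanned (X t).
  case: (eqVneq t sp) => [->|ne]; last by apply: (gen (inr t)); rewrite /valid; apply/eqP => -[]; apply/eqP.
  have e : X sp = - (\sum_(i < g) (p i * q i - q i * p i) + \sum_(t' | t' != sp) X t').
    have h := HB.1; rewrite /rel_holds (bigD1 sp) //= in h.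
    by apply/eqP; rewrite -addr_eq0 addrCA h.
  rewrite e -scaleN1r; apply: spannedZ; apply: spannedD.
    elim/big_ind: _ => //; first exact: spanned0; first exact: spannedD.
    move=> i _; rewrite -[_ - _](addrC) -scaleN1r addrC; apply: spannedD; first exact: spannedM.
    by apply: spannedZ; exact: spannedM.
  elim/big_ind: _ => //; first exact: spanned0; first exact: spannedD.
  move=> t' ne; apply: (gen (inr t')); rewrite /valid; apply/eqP => -[] e'; by rewrite e' eqxx in ne.
by apply/pbP; apply: (abar_ind Pc HB) => [i|i|t]; apply/pbP.
Qed.


Lemma sum_pick (V : nmodType) (T : eqType) (U : seq T) (w : T) (F : T -> V) :
  uniq U -> w \in U -> \sum_(u <- U) (if u == w then F u else 0) = F w.
Proof.
move=> uU wU; rewrite (bigD1_seq w) //= eqxx big1 ?addr0 // => u /negPf ->; done.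
Qed.

Lemma sum_neq0 (T : eqType) (U : seq T) (F : T -> rat) :
  \sum_(u <- U) F u != 0 -> exists2 u, u \in U & F u != 0.
Proof.
elim: U => [|x U IH]; first by rewrite big_nil eqxx.
rewrite big_cons; case: (eqVneq (F x) 0) => [->|nz] h; last by exists x; rewrite ?mem_head.
by rewrite add0r in h; case: (IH h) => u uU Fu; exists u; rewrite ?inE ?uU ?orbT.
Qed.

Lemma coef_ev r u : validr r -> coef (ev r) u = \sum_(e <- r) e.1 * (u == e.2)%:R.
Proof.
move=> v; rewrite /ev coef_sum big_seq [RHS]big_seq; apply: eq_bigr => e er.
by rewrite coefZ coef_mw //; exact: (allP v _ er).
Qed.

Lemma expand b : exists U : seq (seq Let), [/\ uniq U, all (all valid) U,
  (forall u, coef b u != 0 -> u \in U) & b = \sum_(u <- U) coef b u *: mw u].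
Proof.
have [r [v ->]] := spanned_all b.
exists (undup (map snd r)); split.
- exact: undup_uniq.
- apply/allP => u; rewrite mem_undup => /mapP [e er ->]; exact: (allP v _ er).
- move=> u; rewrite coef_ev // => /sum_neq0 [e er]; rewrite mem_undup.
  case: (eqVneq u e.2) => [->|ne]; first by move=> _; apply: map_f.
  by rewrite mulr0 eqxx.
rewrite (eq_bigr (fun u => \sum_(e <- r) (e.1 * (u == e.2)%:R) *: mw u)); last first.
  by move=> u _; rewrite coef_ev // scaler_suml.
rewrite exchange_big /ev big_seq [RHS]big_seq; apply: eq_bigr => e er.
rewrite -(sum_pick (fun u => e.1 *: mw u) (undup_uniq (map snd r))); last first.
  by rewrite mem_undup; apply: map_f.
by apply: eq_bigr => u _; case: eqP => _; rewrite ?mulr1 ?mulr0 ?scale0r.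
Qed.



Lemma faithful b : (forall u, coef b u = 0) -> b = 0.
Proof.
move=> h; have [U [_ _ _ ->]] := expand b.
by rewrite big1 // => u _; rewrite h scale0r.
Qed.

Lemma coef_mul b c U1 U2 u : all (all valid) U1 -> all (all valid) U2 ->
  b = \sum_(u1 <- U1) coef b u1 *: mw u1 -> c = \sum_(u2 <- U2) coef c u2 *: mw u2 ->
  coef (b * c) u = \sum_(u1 <- U1) \sum_(u2 <- U2) coef b u1 * coef c u2 * (u == u1 ++ u2)%:R.
Proof.
move=> v1 v2 eb ec; rewrite {1}eb {1}ec mulr_suml coef_sum big_seq [RHS]big_seq.
apply: eq_bigr => u1 h1; rewrite mulr_sumr coef_sum big_seq [RHS]big_seq.
apply: eq_bigr => u2 h2.
rewrite -scalerAl -scalerAr scalerA -mw_cat coefZ coef_mw //.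
by rewrite all_cat (allP v1 _ h1) (allP v2 _ h2).
Qed.

Definition isLead b L := coef b L != 0 /\ forall u, coef b u != 0 -> (code u <= code L)%N.

Lemma lead_mul b c Lb Lc : isLead b Lb -> isLead c Lc ->
  isLead (b * c) (Lb ++ Lc) /\ coef (b * c) (Lb ++ Lc) = coef b Lb * coef c Lc.
Proof.
move=> [nb hb] [nc hc].
have [U1 [uU1 vU1 sU1 eU1]] := expand b.
have [U2 [uU2 vU2 sU2 eU2]] := expand c.
have key : coef (b * c) (Lb ++ Lc) = coef b Lb * coef c Lc.
  rewrite (coef_mul _ vU1 vU2 eU1 eU2).
  rewrite (eq_bigr (fun u1 => if u1 == Lb then \sum_(u2 <- U2) (if u2 == Lc then
        coef b u1 * coef c u2 else 0) else 0)); last first.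
    move=> u1 _; case: (eqVneq u1 Lb) => [->|ne1].
      apply: eq_bigr => u2 _; case: (eqVneq u2 Lc) => [->|ne2]; first by rewrite eqxx mulr1.
      case: (eqVneq (coef c u2) 0) => [->|nz2]; first by rewrite !mulr0 mul0r.
      case: eqP => [e|]; last by rewrite mulr0.
      have [_ ] := code_mono_eq (leqnn (code Lb)) (hc _ nz2) (esym (congr1 code e)).
      by move=> e2; rewrite e2 eqxx in ne2.
    apply: big1 => u2 _.
    case: (eqVneq (coef c u2) 0) => [->|nz2]; first by rewrite !mulr0 mul0r.
    case: (eqVneq (coef b u1) 0) => [->|nz1]; first by rewrite !mul0r.
    case: eqP => [e|]; last by rewrite mulr0.
    have [e1 _] := code_mono_eq (hb _ nz1) (hc _ nz2) (esym (congr1 code e)).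
    by rewrite e1 eqxx in ne1.
  rewrite (sum_pick (fun u1 => \sum_(u2 <- U2) (if u2 == Lc then coef b u1 * coef c u2 else 0))) //;
    last exact: sU1.
  by rewrite (sum_pick (fun u2 => coef b Lb * coef c u2)) //; exact: sU2.
split=> //; split; first by rewrite key mulf_neq0.
move=> u; rewrite (coef_mul _ vU1 vU2 eU1 eU2) => /sum_neq0 [u1 h1] /sum_neq0 [u2 h2].
case: (eqVneq (coef c u2) 0) => [->|nz2]; first by rewrite !mulr0 mul0r eqxx.
case: (eqVneq (coef b u1) 0) => [->|nz1]; first by rewrite !mul0r eqxx.
case: (@eqP _ u (u1 ++ u2)) => [-> _|ne]; first by apply: code_mono; [exact: hb | exact: hc].
by rewrite mulr0 eqxx.
Qed.

Lemma seq_max (s : seq (seq Let)) : s != [::] ->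
  exists2 L, L \in s & forall u, u \in s -> (code u <= code L)%N.
Proof.
elim: s => [|x s IH] // _.
case: (eqVneq s [::]) => [->|ns].
  by exists x; rewrite ?mem_head // => u; rewrite inE => /eqP ->.
have [L Ls hL] := IH ns.
case: (leqP (code x) (code L)) => h.
  exists L; first by rewrite inE Ls orbT.
  by move=> u; rewrite inE => /orP [/eqP ->|]; [exact: h | exact: hL].
exists x; first exact: mem_head.
move=> u; rewrite inE => /orP [/eqP ->//|/hL hu]; exact: (leq_trans hu (ltnW h)).
Qed.

Lemma lead_ex b : b != 0 -> exists L, isLead b L.
Proof.
move=> nb; have [U [_ _ sU eU]] := expand b.
set s := [seq u <- U | coef b u != 0].
case: (eqVneq s [::]) => [e|ne].
  exfalso; move/eqP: nb; apply; apply: faithful => u.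
  apply/eqP; apply: contraT => nz.
  have : u \in s by rewrite mem_filter nz sU.
  by rewrite e.
have [L Ls hL] := seq_max ne.
exists L; split; first by move: Ls; rewrite mem_filter => /andP [].
by move=> u nz; apply: hL; rewrite mem_filter nz sU.
Qed.



Lemma lead_uniq b L1 L2 : isLead b L1 -> isLead b L2 -> L1 = L2.
Proof.
move=> [n1 h1] [n2 h2]; apply: code_inj; apply/eqP; rewrite eqn_leq.
by rewrite (h2 _ n1) (h1 _ n2).
Qed.

Lemma word_root (l L : seq Let) : l != [::] ->
  (forall L', (0 < size L' < size l)%N -> L' ++ l != l ++ L') ->
  L ++ l = l ++ L -> exists k, L = flatten (nseq k l).
Proof.
move=> nl prim.
elim: {L}(size L).+1 {-2}L (ltnSn (size L)) => // n IH L hL e.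
case: (eqVneq L [::]) => [->|nL]; first by exists 0%N.
case: (ltnP (size L) (size l)) => hs.
  exfalso; move/eqP: e; apply/negP; apply: prim.
  by rewrite hs andbT lt0n size_eq0.
have tl : take (size l) L = l.
  by have := congr1 (take (size l)) e; rewrite takel_cat // take_size_cat.
have eL : L = l ++ drop (size l) L by rewrite -{1}(cat_take_drop (size l) L) tl.
set L' := drop (size l) L in eL.
have e' : L' ++ l = l ++ L'.
  move: e; rewrite eL -catA => /eqP; rewrite eqseq_cat // => /andP [_ /eqP ->].
  done.
have hL' : (size L' < n)%N.
  move: hL; rewrite eL size_cat ltnS => h; apply: leq_trans h.
  by rewrite -{1}(add0n (size L')) ltn_add2r lt0n size_eq0.
have [k ek] := IH L' hL' e'.
by exists k.+1; rewrite eL ek.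
Qed.

Lemma isLead1 : isLead 1 [::].
Proof.
have e : (1 : B) = mw [::] by [].
split; first by rewrite e coef_mw // eqxx oner_neq0.
by move=> u; rewrite e coef_mw //; case: (@eqP _ u [::]) => [->|]; rewrite ?eqxx.
Qed.

Lemma lead_pow w l0 k : isLead w l0 ->
  isLead (w ^+ k) (flatten (nseq k l0)) /\ coef (w ^+ k) (flatten (nseq k l0)) = coef w l0 ^+ k.
Proof.
move=> hw; elim: k => [|k [IH1 IH2]].
  rewrite expr0 /=; split; first exact: isLead1.
  by rewrite -[1 : B]/(mw [::]) coef_mw // eqxx.
have [h1 h2] := lead_mul hw IH1.
by rewrite exprS /=; split => //; rewrite h2 IH2 -exprS.
Qed.

Lemma sum_ext (V : nmodType) N M (F : nat -> V) : (N <= M)%N ->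
  \sum_(i < N) F i = \sum_(i < M) (if (i < N)%N then F i else 0).
Proof. by move=> h; rewrite (big_ord_widen M F h) big_mkcond. Qed.

Lemma sum_delta2 (V : nmodType) M k (F : nat -> V) : (k < M)%N ->
  \sum_(i < M) (if (i : nat) == k then F i else 0) = F k.
Proof.
move=> h; rewrite -big_mkcond (big_pred1 (Ordinal h)) //.
Qed.

Section Cent.
Variables (w : B) (l0 : seq Let).
Hypothesis hw : isLead w l0.
Hypothesis nl0 : l0 != [::].
Hypothesis prim : forall L', (0 < size L' < size l0)%N -> L' ++ l0 != l0 ++ L'.

Lemma cent_aux n : forall b, (forall u, coef b u != 0 -> (code u < n)%N) -> b * w = w * b ->
  exists N (c : nat -> rat), b = \sum_(i < N) c i *: w ^+ i.
Proof.
elim: n => [|n IH] b hb cb.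
  exists 0%N, (fun _ => 0); rewrite big_ord0; apply: faithful => u.
  by apply/eqP; apply: contraT => /hb.
case: (eqVneq b 0) => [->|nb]; first by exists 0%N, (fun _ => 0); rewrite big_ord0.
have [L hL] := lead_ex nb.
have [l1 _] := lead_mul hL hw.
have [l2 _] := lead_mul hw hL.
rewrite cb in l1.
have eL := lead_uniq l1 l2.
have [k ek] := word_root nl0 prim eL.
have [hp cp] := lead_pow k hw.
rewrite -ek in hp cp.
have c0 : coef w l0 ^+ k != 0 by rewrite expf_neq0 //; case: hw.
set a := coef b L / coef w l0 ^+ k.
set b' := b - a *: w ^+ k.
have cb' : b' * w = w * b'.
  by rewrite /b' mulrBl mulrBr cb -scalerAl -scalerAr -exprS -exprSr.
have sb' : forall u, coef b' u != 0 -> (code u < n)%N.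
  move=> u nz.
  have hu : (code u <= code L)%N.
    move: nz; rewrite /b' coefB coefZ.
    case: (eqVneq (coef b u) 0) => [-> |nz1]; last by move=> _; exact: hL.2.
    case: (eqVneq (coef (w ^+ k) u) 0) => [->|nz2]; first by rewrite mulr0 subr0 eqxx.
    by move=> _; exact: hp.2.
  have neu : u != L.
    apply/eqP => e; move: nz; rewrite e /b' coefB coefZ cp /a mulfVK // subrr eqxx //.
  have : code u != code L by apply: contra neu => /eqP /code_inj ->.
  move=> ne; have := hL.1; move: hu; rewrite leq_eqVlt (negPf ne) /= => h _.
  by apply: (leq_trans h); rewrite -ltnS; apply: hb; exact: hL.1.
have [N [c ec]] := IH b' sb' cb'.
exists (N + k.+1)%N, (fun i => (if (i < N)%N then c i else 0) + (if i == k then a else 0)).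
have -> : b = b' + a *: w ^+ k by rewrite /b' subrK.
rewrite ec (sum_ext (fun i => c i *: w ^+ i) (leq_addr k.+1 N)).
rewrite -(sum_delta2 (fun i => a *: w ^+ i) (_ : (k < N + k.+1)%N)); last by rewrite addnS ltnS leq_addl.
rewrite -big_split /=; apply: eq_bigr => i _.
by rewrite scalerDl; congr (_ + _); case: ifP; rewrite ?scale0r.
Qed.

Lemma centralizer b : b * w = w * b -> exists N (c : nat -> rat), b = \sum_(i < N) c i *: w ^+ i.
Proof.
have [U [_ _ sU _]] := expand b.
apply: (@cent_aux (\max_(u <- U) code u).+1) => u /sU uU.
by rewrite ltnS; apply: leq_bigmax_seq.
Qed.
End Cent.

End Model.

Ltac snia :=
  repeat match goal with
  | H : is_true (leq _ _) |- _ => move/leP: H => H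
  | H : is_true (@eq_op _ _ _) |- _ => move/eqP: H => H
  end;
  (match goal with
  | |- is_true (leq _ _) => apply/leP
  | |- is_true (@eq_op _ _ _) => apply/eqP
  | _ => idtac end);
  unfold addn, muln, subn, addn_rec, muln_rec, subn_rec in *; nia.

Lemma ad_sum (B : algType rat) (w x : B) N (c : nat -> rat) :
  (\sum_(i < N) c i *: w ^+ i) * x - x * (\sum_(i < N) c i *: w ^+ i) =
  \sum_(i < N) c i *: (w ^+ i * x - x * w ^+ i).
Proof.
rewrite mulr_suml mulr_sumr -sumrB; apply: eq_bigr => i _.
by rewrite scalerBr scalerAl scalerAr.
Qed.

Lemma key (g : nat) (S : finType) (B : algType rat) (p q : 'I_g -> B) (X : S -> B)
  (HB : is_Abar p q X) (s : S) (b : B) : b * X s = X s * b ->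
  exists N (c : 'I_N -> rat), forall x,
    b * x - x * b = \sum_(n < N) c n *: (X s ^+ n * x - x * X s ^+ n).
Proof.
move=> cb.
suff [[N [c ec]]|hc] : (exists N (c : nat -> rat), b = \sum_(i < N) c i *: X s ^+ i) \/
                  (forall x, b * x = x * b).
- by exists N, (fun i => c (i : nat)) => x; rewrite ec ad_sum.
- by exists 0%N, (fun _ => 0) => x; rewrite hc subrr big_ord0.
case: (boolP [exists t, t != s]) => [/existsP [sp nsp] | /existsPn allS].
  left.
  pose ws : seq (Let g S) := [:: inr s].
  have v : all (valid sp) ws.
    rewrite /= /valid andbT; apply/eqP => -[] ee; by rewrite ee eqxx in nsp.
  have e : X s = mw p q X ws by rewrite /= mulr1.
  have hw : isLead HB sp (X s) ws.
    split; first by rewrite e coef_mw // eqxx oner_neq0.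
    by move=> u; rewrite e coef_mw //; case: (@eqP _ u ws) => [->|]; rewrite ?eqxx.
  apply: (centralizer hw) => //.
  by case=> [|x [|y L']].
have Es t : t = s by apply/eqP; move: (allS t); rewrite negbK.
have eX : X s = - \sum_(i < g) (p i * q i - q i * p i).
  have z : \sum_(t | t != s) X t = 0 by apply: big1 => t; rewrite (Es t) eqxx.
  have h := HB.1; rewrite /rel_holds (bigD1 s) //= z addr0 in h.
  by apply/eqP; rewrite -addr_eq0 addrC h.
case: (posnP g) => [g0|gpos].
  right; have [U [_ vU _ eU]] := expand HB s b.
  have m1 u : u \in U -> mw p q X u = 1.
    move=> uU; have := allP vU _ uU; case: u uU => [|x u] //= _ /andP [vx _].
    case: x vx => [[i|i]|t]; try (exfalso; have h : (i < 0)%N by rewrite -g0 ltn_ord); try (by rewrite ltn0 in h).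
    by rewrite /valid (Es t) eqxx.
  move=> x; rewrite eU big_seq mulr_suml mulr_sumr; apply: eq_bigr => u uU.
  by rewrite m1 // -scalerAl -scalerAr mul1r mulr1.
left.
have hi0 : (g.-1 < g)%N by rewrite ltn_predL.
pose i0 := Ordinal hi0.
pose qp (i : 'I_g) : seq (Let g S) := [:: inl (inr i); inl (inl i)].
pose pq (i : 'I_g) : seq (Let g S) := [:: inl (inl i); inl (inr i)].
have vqp i : all (valid s) (qp i) by [].
have vpq i : all (valid s) (pq i) by [].
have ew : X s = \sum_(i < g) (mw p q X (qp i) - mw p q X (pq i)).
  by rewrite eX -sumrN; apply: eq_bigr => i _; rewrite /= !mulr1 opprB.
have cw u : coef HB s (X s) u = \sum_(i < g) ((u == qp i)%:R - (u == pq i)%:R).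
  by rewrite ew coef_sum; apply: eq_bigr => i _; rewrite coefB !coef_mw.
have hw : isLead HB s (X s) (qp i0).
  split.
    rewrite cw (bigD1 i0) //= big1 ?addr0.
      by rewrite eqxx.
    move=> i ne; rewrite /qp /pq /=.
    suff -> : ([:: inl (inr i0); inl (inl i0)] == [:: inl (inr i); inl (inl i)] :> seq (Let g S)) = false.
      by rewrite subr0.
    by apply/negP => /eqP [e]; rewrite e eqxx in ne.
  move=> u; rewrite cw => /sum_neq0 [i _].
  have hi := ltn_ord i; have hg : g = g.-1.+1 by rewrite prednK.
  case: (@eqP _ u (qp i)) => [-> _|_].
    rewrite /code /= /bs /mm. snia.
  case: (@eqP _ u (pq i)) => [-> _|_]; last by rewrite subrr eqxx.
  rewrite /code /= /bs /mm. snia.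
apply: (centralizer hw) => //.
case=> [|c [|d L']] //= _.
by apply/eqP => -[e1 e2].
Qed.

Lemma subrACA (V : zmodType) (a b c d : V) : (a - c) - (b - d) = (a - b) - (c - d).
Proof. by rewrite !opprB addrACA [RHS]addrACA (addrC (- c)). Qed.

Lemma adZ (A : algType rat) (b x y : A) a :
  b * (a *: x + y) - (a *: x + y) * b = a *: (b * x - x * b) + (b * y - y * b).
Proof. by rewrite scalerBr scalerAr scalerAl mulrDr mulrDl opprD addrACA. Qed.

Lemma adM (A : algType rat) (b x y : A) :
  b * (x * y) - (x * y) * b = (b * x - x * b) * y + x * (b * y - y * b).
Proof. by rewrite mulrBl mulrBr !mulrA addrA subrK. Qed.

Unset Implicit Arguments.
Theorem lemma7p6 (g : nat) (S : finType) (B : algType rat)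
  (p q : 'I_g -> B) (X : S -> B) (HB : is_Abar p q X) (s : S) :
  (* surjectivity of Der^S_s -> ODer^SS *)
  (forall D : B -> B, semi_special X D ->
     exists D0 : B -> B, der_S_s X s D0 /\ inner_der (fun x => D x - D0 x)) /\
  (* kernel = span of the inner derivations [X_s^n, .], n >= 0 *)
  (forall D0 : B -> B, der_S_s X s D0 ->
     (inner_der D0 <->
      exists (N : nat) (c : 'I_N -> rat), forall x,
        D0 x = \sum_(n < N) c n *: (X s ^+ n * x - x * X s ^+ n))).
Proof.
split.
  move=> D [[lD dD] hD]; have [b hb] := hD s.
  exists (fun x => D x - (b * x - x * b)); split; last first.
    by exists b => x; rewrite opprB addrC subrK.
  split; last by rewrite hb subrr.
  split.
    split.
      move=> a x y; rewrite lD adZ opprD addrACA (scalerBr a (D x)). reflexivity.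
    move=> x y; rewrite dD adM opprD addrACA [in RHS]mulrBl [in RHS]mulrBr. reflexivity.
  move=> t; have [bt hbt] := hD t; exists (bt - b).
  by rewrite hbt mulrBl mulrBr subrACA.
move=> D0 [_ h0]; split.
  move=> [b hb].
  have cb : b * X s = X s * b by apply/eqP; rewrite -subr_eq0 -hb h0.
  have [N [c hc]] := key HB cb.
  by exists N, c => x; rewrite hb hc.
move=> [N [c hc]]; exists (\sum_(n < N) c n *: X s ^+ n) => x.
rewrite hc mulr_suml mulr_sumr -sumrB; apply: eq_bigr => i _.
by rewrite scalerBr scalerAl scalerAr.
Qed.
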